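(* Let $\mathscr{D}_n$ be the set of derangements of $[n]=\{1,\dots,n\}$. For every integer $m\ge 2$ and every $0\le r\le m-1$, $$\lim_{n\to\infty}\frac{\left|\{\pi\in\mathscr{D}_n:\ \mathrm{maj}(\pi)\equiv r\pmod m\}\right|}{|\mathscr{D}_n|}=\frac1m .$$ That is, the major index over derangements of $[n]$ has the balanced property.
   Context: A derangement of $[n]$ is a permutation $\pi=\pi_1\pi_2\cdots\pi_n$ of $[n]$ with $\pi_i\ne i$ for all $i$. The major index of a permutation $\pi=\pi_1\cdots\pi_n$ is $\mathrm{maj}(\pi)=\sum_{i:\,\pi_i>\pi_{i+1}} i$. A statistic $\xi$ on sets $Q_n$ has the balanced property if for every $m\ge 2$ and every $0\le r\le m-1$, $\lim_{n\to\infty}|\{\pi\in Q_n:\xi(\pi)\equiv r \pmod m\}|/|Q_n| = 1/m$. *)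

(* Defs.v *)
From HB Require Import structures.
From mathcomp Require Import all_boot all_order all_algebra all_fingroup.
Set Implicit Arguments. Unset Strict Implicit. Unset Printing Implicit Defensive.
Import Order.TTheory GRing.Theory Num.Theory.

(* Permutations of [n] are represented as 'S_n, permutations of 'I_n = {0,...,n-1};
   the value i+1 of the paper corresponds to i here (an order-preserving relabelling). *)

Definition derangement n (s : 'S_n) : bool := [forall i : 'I_n, s i != i].

(* major index: sum of the (1-based) positions i in {1..n-1} with pi_i > pi_{i+1}.
   In 0-based terms: positions j in {0..n-2} with s j > s (j+1), contributing j+1. *)
Definition maj n (s : 'S_n) : nat :=
  \sum_(j < n) \sum_(k < n | (nat_of_ord k == j.+1) && (nat_of_ord (s k) < nat_of_ord (s j))%N) j.+1.

Definition derangements n : {set 'S_n} := [set s : 'S_n | derangement s].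

Definition derangements_maj_mod n (m r : nat) : {set 'S_n} :=
  [set s : 'S_n | derangement s && (maj s %% m == r)].

Definition maj_ratio n (m r : nat) : rat :=
  (#|derangements_maj_mod n m r|%:R / #|derangements n|%:R)%R.

(* Main.v *)
Require Import Defs.
From HB Require Import structures.
From mathcomp Require Import all_boot all_order all_algebra all_fingroup.
Import Order.TTheory GRing.Theory Num.Theory.
Set Implicit Arguments. Unset Strict Implicit. Unset Printing Implicit Defensive.

Lemma am_spec n (P : pred 'I_n) (F : 'I_n -> nat) i0 j :
  P j -> extremum_spec leq P F (arg_min i0 P F).
Proof.
move=> Pj.
suff -> : arg_min i0 P F = arg_min j P F by apply: arg_minnP.
rewrite /arg_min /extremum; case: pickP => //= no.
have [k Pk mink] := arg_minnP F Pj.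
have := no k; rewrite /= Pk /=.
by move/negP; case; apply/forall_inP => x Px; apply: mink.
Qed.

Definition nx n (V : {set 'I_n}) (v : 'I_n) : 'I_n :=
  [arg min_(u < v | (u \in V) && (v < u)) (val u)].
Definition mnV n (V : {set 'I_n}) (v : 'I_n) : 'I_n :=
  [arg min_(u < v | u \in V) (val u)].
Definition rho n (V : {set 'I_n}) (v : 'I_n) : 'I_n :=
  if v \in V then (if [exists u, (u \in V) && (v < u)] then nx V v else mnV V v)
  else v.

Lemma rhoV n (V : {set 'I_n}) v : v \in V -> rho V v \in V.
Proof.
move=> vV; rewrite /rho /nx /mnV vV; case: ifP => [/existsP [w /andP[wV vw]]|_].
  have Pw : (w \in V) && (v < w) by rewrite wV.
  by case: (@am_spec n (fun u => (u \in V) && (v < u)) (fun u => val u) v w Pw) => k /andP[].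
by case: (@am_spec n (fun u => u \in V) (fun u => val u) v v vV).
Qed.

Lemma rho_notV n (V : {set 'I_n}) v : v \notin V -> rho V v = v.
Proof. by rewrite /rho => /negbTE ->. Qed.

Lemma rho_gt n (V : {set 'I_n}) v : v \in V -> [exists u, (u \in V) && (v < u)] ->
  (v < rho V v) /\ (forall u, u \in V -> v < u -> rho V v <= u).
Proof.
move=> vV ex; rewrite /rho /nx /mnV vV ex; move/existsP: ex => [w /andP[wV vw]].
have Pw : (w \in V) && (v < w) by rewrite wV.
case: (@am_spec n (fun u => (u \in V) && (v < u)) (fun u => val u) v w Pw).
move=> k /andP[kV vk] mink; split=> // u uV vu; apply: mink; by rewrite uV.
Qed.

Lemma rho_top n (V : {set 'I_n}) y : y \in V -> ~~ [exists u, (u \in V) && (y < u)] ->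
  forall x, x \in V -> rho V y <= x.
Proof.
move=> yV nex; rewrite /rho /nx /mnV yV (negbTE nex).
case: (@am_spec n (fun u => u \in V) (fun u => val u) y y yV) => k kV mink x xV.
exact: mink.
Qed.

Lemma top_max n (V : {set 'I_n}) y x : ~~ [exists u, (u \in V) && (y < u)] ->
  x \in V -> x <= y.
Proof.
move=> nex xV; rewrite leqNgt; apply/negP => yx; move/negP: nex; apply.
by apply/existsP; exists x; rewrite xV.
Qed.

Lemma rho_lt n (V : {set 'I_n}) x y : x \in V -> y \in V -> x < y ->
  [exists u, (u \in V) && (y < u)] -> rho V x < rho V y.
Proof.
move=> xV yV xy ey.
have ex : [exists u, (u \in V) && (x < u)] by apply/existsP; exists y; rewrite yV.
have [_ h] := rho_gt xV ex; have [hy _] := rho_gt yV ey.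
exact: leq_ltn_trans (h y yV xy) hy.
Qed.

Lemma rho_topl n (V : {set 'I_n}) x y : x \in V -> y \in V -> x != y ->
  ~~ [exists u, (u \in V) && (y < u)] -> rho V y < rho V x.
Proof.
move=> xV yV xy ny.
have xly : x < y by rewrite ltn_neqAle (top_max ny xV) andbT; apply: contra xy => /eqP/val_inj ->.
have ex : [exists u, (u \in V) && (x < u)] by apply/existsP; exists y; rewrite yV.
have [hx _] := rho_gt xV ex.
exact: leq_ltn_trans (rho_top yV ny xV) hx.
Qed.

Lemma rho_inj n (V : {set 'I_n}) : injective (rho V).
Proof.
have key : forall x y, x \in V -> y \in V -> x < y -> rho V x != rho V y.
  move=> x y xV yV xy.
  case ey: [exists u, (u \in V) && (y < u)].
    by apply/eqP => e; move: (rho_lt xV yV xy ey); rewrite e ltnn.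
  have xy' : x != y by apply/eqP=> exy; rewrite exy ltnn in xy.
  by apply/eqP => e; move: (rho_topl xV yV xy' (negbT ey)); rewrite e ltnn.
move=> x y e; case xV: (x \in V); case yV: (y \in V).
- case: (ltngtP x y) => [xy|yx|/val_inj //].
    by move: (key _ _ xV yV xy); rewrite e eqxx.
  by move: (key _ _ yV xV yx); rewrite e eqxx.
- by move: (rhoV xV); rewrite e rho_notV ?yV.
- by move: (rhoV yV); rewrite -e rho_notV ?xV.
- by move: e; rewrite !rho_notV ?xV ?yV.
Qed.
Definition blk n m : {set 'I_n} := [set i : 'I_n | i < m].
Definition Vof n m (s : 'S_n) := s @: blk n m.
Definition rhop n (V : {set 'I_n}) : 'S_n := perm (@rho_inj n V).
Definition Phi n m (s : 'S_n) : 'S_n := s * rhop (Vof m s).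

Lemma PhiE n m (s : 'S_n) (i : 'I_n) : Phi m s i = rho (Vof m s) (s i).
Proof. by rewrite permM permE. Qed.

Lemma inV n m (s : 'S_n) (i : 'I_n) : i < m -> s i \in Vof m s.
Proof. by move=> im; apply: imset_f; rewrite inE. Qed.

Lemma notV n m (s : 'S_n) (i : 'I_n) : m <= i -> s i \notin Vof m s.
Proof.
move=> mi; apply/imsetP => [[k]]; rewrite inE => km /perm_inj e.
by move: km; rewrite -e ltnNge mi.
Qed.

Lemma Vof_Phi n m (s : 'S_n) : Vof m (Phi m s) = Vof m s.
Proof.
apply/eqP; rewrite eqEcard !card_imset ?leqnn ?andbT; try exact: perm_inj.
apply/subsetP => x /imsetP [i iB ->]; rewrite PhiE; apply: rhoV; exact: imset_f.
Qed.

Lemma Phi_inj n m : injective (@Phi n m).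
Proof.
move=> s t e; have := Vof_Phi m s; rewrite e Vof_Phi => eV.
by move: e; rewrite /Phi eV; apply: mulIg.
Qed.

Definition goodb n m (s : 'S_n) := [forall i : 'I_n, (i < m) ==> (m <= s i)].

Lemma Phi_good n m (s : 'S_n) : goodb m s -> goodb m (Phi m s).
Proof.
move=> /forallP g; apply/forallP => i; apply/implyP => im.
have := rhoV (inV s im); rewrite -PhiE => /imsetP [k]; rewrite inE => km ->.
by have := g k; rewrite km.
Qed.

Lemma Phi_der n m (s : 'S_n) : goodb m s -> derangement (Phi m s) = derangement s.
Proof.
move=> g; have g' := Phi_good g; move/forallP: g => g; move/forallP: g' => g'.
apply: eq_forallb => i; case: (ltnP i m) => im.
  have h1 := g i; have h2 := g' i; rewrite im /= in h1 h2.
  have a : s i != i by apply/eqP => e; move: h1; rewrite e leqNgt im.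
  have b : Phi m s i != i by apply/eqP => e; move: h2; rewrite e leqNgt im.
  by rewrite a b.
by rewrite PhiE rho_notV // notV.
Qed.

Definition dsc n (s : 'S_n) (j : 'I_n) : bool :=
  [exists k : 'I_n, (val k == j.+1) && (s k < s j)].

Lemma majE n (s : 'S_n) : maj s = \sum_(j < n) dsc s j * j.+1.
Proof.
apply: eq_bigr => j _; case: (boolP (dsc s j)) => [/existsP [k /andP [/eqP kj skj]]| nd].
  rewrite (eq_bigl (pred1 k)) ?big_pred1_eq ?mul1n // => k' /=.
  apply/andP/eqP => [[/eqP k'j _]| ->]; first by apply: val_inj; rewrite /= k'j kj.
  by rewrite kj eqxx skj.
rewrite big_pred0 ?mul0n // => k'; apply/negP => h; move/negP: nd; apply.
by apply/existsP; exists k'.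
Qed.

Lemma dsc_k n (s : 'S_n) (j k : 'I_n) : val k = j.+1 -> dsc s j = (s k < s j).
Proof.
move=> kj; apply/existsP/idP => [[k' /andP[/eqP e lt]]| lt].
  by have -> : k = k' by apply: val_inj; rewrite /= kj e.
by exists k; rewrite kj eqxx.
Qed.

Lemma dsc_last n (s : 'S_n) (j : 'I_n) : n <= j.+1 -> dsc s j = false.
Proof.
move=> h; apply/existsP => [[k /andP[/eqP e _]]].
by have := ltn_ord k; rewrite e ltnNge h.
Qed.

Lemma sum_ind (R : nzRingType) n q (c : R) : q < n ->
  (\sum_(j < n) ((val j == q) : nat)%:R * c = c)%R.
Proof.
move=> hq; rewrite (bigD1 (Ordinal hq)) //= eqxx mul1r big1 ?addr0 // => j nj.
suff -> : (val j == q) = false by rewrite mul0r.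
apply/negbTE; apply: contra nj => /eqP e; apply/eqP/val_inj => /=; exact: e.
Qed.
Lemma term_eq (R : nzRingType) n m (s : 'S_n) (p : 'I_n) (y : 'I_n) (j : 'I_n) :
  (m%:R : R)%R = 0%R -> m <= n -> p < m -> s p = y ->
  (forall u, u \in Vof m s -> u <= y) ->
  ((((dsc (Phi m s) j : nat)%:R * (j.+1)%:R : R) =
   (dsc s j : nat)%:R * (j.+1)%:R + ((j.+1 == p) : nat)%:R * p%:R
     - ((val j == p) : nat)%:R * (p.+1)%:R))%R.
Proof.
move=> m0 mn pm spy ymax.
have yV : y \in Vof m s by rewrite -spy inV.
have nex : ~~ [exists u, (u \in Vof m s) && (y < u)].
  apply/existsP => [[u /andP[uV yu]]]; by move: (ymax u uV); rewrite leqNgt yu.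
case: (ltnP j.+1 n) => hjn; last first.
  rewrite !dsc_last //=; have -> : (j.+1 == p) = false.
    by apply/negbTE; rewrite neq_ltn (leq_ltn_trans _ (leq_trans pm (leq_trans mn hjn))) ?orbT.
  rewrite !mul0r !add0r; case: eqP => [e|_]; last by rewrite mul0r oppr0.
  have : p.+1 = m by apply/eqP; rewrite eqn_leq pm -e (leq_trans mn hjn).
  by move=> ->; rewrite m0 mulr0 oppr0.
set k := Ordinal hjn.
rewrite !(@dsc_k _ _ j k) //.
case: (ltngtP j.+1 m) => hjm.
- have jm : j < m by apply: ltnW.
  have kV := inV s (hjm : k < m); have jV := inV s jm.
  have kj : s k != s j.
    by apply/eqP => /perm_inj /(congr1 val) /= h; exact: (n_Sn _ (esym h)).
  rewrite !PhiE.
  case: (eqVneq (s j) y) => [ey|ny].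
    have jp : j = p by apply: (@perm_inj _ s); rewrite ey spy.
    rewrite -ey in ymax nex.
    have -> : s k < s j by rewrite ltn_neqAle ymax // andbT; apply: contra kj => /eqP/val_inj ->.
    have -> : (rho (Vof m s) (s k) < rho (Vof m s) (s j)) = false.
      by apply/negbTE; rewrite -leqNgt ltnW // rho_topl.
    by rewrite jp eqxx eqn_leq ltnn /= !mul0r !mul1r addr0 subrr.
  case: (eqVneq (s k) y) => [ek|nk].
    have kp : k = p by apply: (@perm_inj _ s); rewrite ek spy.
    rewrite -ek in ymax nex.
    have -> : (s k < s j) = false by apply/negbTE; rewrite -leqNgt ymax.
    have -> : rho (Vof m s) (s k) < rho (Vof m s) (s j).
      by rewrite rho_topl // eq_sym.
    have -> : (j.+1 == p) by rewrite -kp.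
    have jp' : (val j == p) = false by rewrite -kp /= eq_sym eqn_leq ltnn.
    by rewrite jp' !mul0r !mul1r add0r subr0 -kp.
  have jnp : (val j == p) = false.
    by apply/negbTE; apply: contra ny => /eqP/val_inj ->; rewrite spy.
  have j1np : (j.+1 == p) = false.
    apply/negbTE; apply: contra nk => /eqP e.
    have kp : k = p by apply: val_inj; rewrite /= e.
    by rewrite kp spy.
  rewrite jnp j1np mul0r addr0 mul0r subr0.
  have top_ne : forall x, x \in Vof m s -> x != y -> [exists u, (u \in Vof m s) && (x < u)].
    move=> x xV xy; apply/existsP; exists y; rewrite yV /= ltn_neqAle ymax // andbT.
    by apply: contra xy => /eqP/val_inj ->.
  case: (ltngtP (s k) (s j)) => h.
  + by rewrite rho_lt // top_ne.
  + have := rho_lt jV kV h (top_ne _ kV nk).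
    by move=> h'; rewrite ltnNge (ltnW h').
  + by move: kj; rewrite (val_inj h) eqxx.
- have jm : m <= j by [].
  have km : m <= k by rewrite /= ltnW.
  rewrite !PhiE !rho_notV ?notV //.
  have -> : (j.+1 == p) = false by apply/negbTE; rewrite neq_ltn (leq_ltn_trans _ hjm) ?orbT // ltnW.
  have -> : (val j == p) = false by apply/negbTE; rewrite neq_ltn (leq_trans pm jm) ?orbT.
  by rewrite !mul0r addr0 subr0.
- rewrite hjm m0 !mulr0 add0r.
  have -> : (m == p) = false by apply/negbTE; rewrite neq_ltn pm orbT.
  rewrite mul0r add0r; case: eqP => [e|_]; last by rewrite mul0r oppr0.
  by rewrite -e hjm m0 mulr0 oppr0.
Qed.
Lemma maj_shift (R : nzRingType) n m (s : 'S_n) : 0 < m -> m <= n ->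
  (m%:R : R)%R = 0%R -> ((maj s)%:R : R)%R = ((maj (Phi m s))%:R + 1)%R.
Proof.
move=> m0 mn mR.
have n0 : 0 < n by apply: leq_trans mn.
pose i0 : 'I_n := Ordinal n0.
have i0V : s i0 \in Vof m s by apply: inV.
case: (@arg_maxnP _ (s i0) (fun u => u \in Vof m s) (fun u => val u) i0V) => y yV ymax.
case/imsetP: (yV) => p; rewrite inE => pm ye.
have te := fun j => @term_eq R n m s p y j mR mn pm (esym ye) ymax.
rewrite !majE !natr_sum.
under eq_bigr do rewrite natrM.
under [in RHS]eq_bigr do rewrite natrM.
rewrite (eq_bigr _ (fun j _ => te j)) big_split big_split /= sumrN.
rewrite sum_ind; last exact: leq_trans pm mn.
have -> : (\sum_(j < n) ((j.+1 == p) : nat)%:R * (p%:R : R) = p%:R)%R.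
  case: (posnP p) => [p0|pp].
    by rewrite p0 big1 // => j _; rewrite mulr0.
  have hq : p.-1 < n by rewrite (leq_ltn_trans (leq_pred _)) // (leq_trans pm mn).
  transitivity (\sum_(j < n) ((val j == p.-1) : nat)%:R * (p%:R : R))%R; last exact: sum_ind.
  by apply: eq_bigr => j _; rewrite -{1}(prednK pp) eqSS.
by rewrite -addn1 natrD opprD !addrA subrK addrK.
Qed.
Lemma maj_mod n m (s : 'S_n) : 1 < m -> m <= n -> maj s %% m = (maj (Phi m s)).+1 %% m.
Proof.
move=> m1 mn.
have := @maj_shift 'Z_m n m s (ltnW m1) mn (pchar_Zp m1).
by rewrite natr1 => /(congr1 (@nat_of_ord _)); rewrite !val_Zp_nat.
Qed.

Definition G n m : {set 'S_n} := [set s : 'S_n | derangement s && goodb m s].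
Definition cls n m t : {set 'S_n} := [set s in G n m | maj s %% m == t].

Lemma cls_le n m r : 1 < m -> m <= n -> r < m ->
  #|cls n m (r.+1 %% m)| <= #|cls n m r|.
Proof.
move=> m1 mn rm; rewrite -(card_imset _ (@Phi_inj n m)).
apply: subset_leq_card; apply/subsetP => x /imsetP [s].
rewrite !inE => /andP [/andP [ds gs] ms] ->.
rewrite Phi_der // ds Phi_good //=.
move: ms; rewrite maj_mod // -[(maj _).+1]addn1 -[r.+1]addn1 eqn_modDr => /eqP ->.
by rewrite modn_small.
Qed.

Lemma cls_eq n m r : 1 < m -> m <= n -> r < m -> #|cls n m r| = #|cls n m 0|.
Proof.
move=> m1 mn rm.
have c1 : forall k, k < m -> #|cls n m k| <= #|cls n m 0|.
  elim=> [//|k IH] km.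
  apply: leq_trans (IH (ltnW km)).
  by have := @cls_le n m k m1 mn (ltnW km); rewrite modn_small.
have c2 : #|cls n m 0| <= #|cls n m m.-1|.
  have hk : (m.-1).+1 = m by apply: prednK; apply: ltnW.
  have := @cls_le n m m.-1 m1 mn; rewrite hk modnn; apply.
  by [].
have lt : forall x, m.-1 - x < m.
  by move=> x; rewrite (leq_ltn_trans (leq_subr x _)) // ltn_predL ltnW.
have c3 : forall d, d < m -> #|cls n m m.-1| <= #|cls n m (m.-1 - d)|.
  elim=> [|d IH] dm; first by rewrite subn0.
  apply: leq_trans (IH (ltnW dm)) _.
  have h : (m.-1 - d.+1).+1 = m.-1 - d.
    by rewrite subnSK // -ltnS prednK // ltnW.
  have := @cls_le n m (m.-1 - d.+1) m1 mn (lt _).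
  by rewrite h modn_small //; apply: lt.
apply/eqP; rewrite eqn_leq c1 //=.
apply: leq_trans c2 _.
have := c3 (m.-1 - r); rewrite subKn; last by rewrite -ltnS prednK // ltnW.
by apply; apply: lt.
Qed.

Lemma cardS n (P : pred 'S_n) : #|[set s | P s]| = \sum_(s : 'S_n) (P s : nat).
Proof. by rewrite -sum1_card big_mkcond /=; apply: eq_bigr => s _; rewrite inE; case: (P s). Qed.

Lemma G_card n m : 1 < m -> m <= n -> #|G n m| = m * #|cls n m 0|.
Proof.
move=> m1 mn.
have m0 : 0 < m by apply: ltnW.
transitivity (\sum_(t < m) #|cls n m t|); last first.
  rewrite (eq_bigr (fun _ => #|cls n m 0|)) ?sum_nat_const ?card_ord //.
  by move=> t _; apply: cls_eq.
rewrite /cls /G cardS.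
under [RHS]eq_bigr do rewrite cardS.
rewrite exchange_big /=; apply: eq_bigr => s _.
under eq_bigr do rewrite inE.
case: (derangement s && goodb m s) => /=; last by rewrite big1.
rewrite (bigD1 (Ordinal (ltn_pmod (maj s) m0))) //= eqxx /= big1 ?addn0 // => t nt.
suff -> : (maj s %% m == t) = false by [].
apply/negbTE; apply: contra nt => /eqP e; apply/eqP/val_inj => /=; by rewrite e.
Qed.
Definition F n (i v : 'I_n) : {set 'S_n} := [set s : 'S_n | derangement s && (s i == v)].

Lemma fib_le n (i v w : 'I_n) : i != v -> i != w -> #|F i v| <= #|F i w|.
Proof.
move=> iv iw; pose t := tperm v w.
have inj : injective (fun s : 'S_n => (t * s * t)%g).
  move=> a b /= e; apply: (mulgI t); apply: (mulIg t); exact: e.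
rewrite -(card_imset _ inj); apply: subset_leq_card; apply/subsetP => x /imsetP [s].
rewrite !inE => /andP [ds /eqP siv] ->.
apply/andP; split.
  apply/forallP => j; rewrite !permM; apply/eqP => h.
  have h' : s (t j) = t j by rewrite -{2}h tpermK.
  by move/forallP: ds => /(_ (t j)); rewrite h' eqxx.
have vi : v != i by rewrite eq_sym.
have wi : w != i by rewrite eq_sym.
by rewrite !permM (tpermD vi wi) siv tpermL.
Qed.

Lemma D_sum n (i : 'I_n) : #|derangements n| = \sum_(w : 'I_n) #|F i w|.
Proof.
rewrite /derangements cardS.
under [RHS]eq_bigr do rewrite cardS.
rewrite exchange_big; apply: eq_bigr => s _.
case: (derangement s) => /=; last by rewrite big1.
rewrite (bigD1 (s i)) //= eqxx big1 ?addn0 // => w nw.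
by rewrite eq_sym (negbTE nw).
Qed.

Lemma fib_bound n (i v : 'I_n) : i != v -> n.-1 * #|F i v| <= #|derangements n|.
Proof.
move=> iv; rewrite (D_sum i) (bigD1 i) //=.
apply: leq_trans (leq_addl _ _).
have hc : n.-1 = #|predC1 i| by rewrite cardC1 card_ord.
rewrite hc -sum_nat_const; apply: leq_sum => w; rewrite inE => wi.
by apply: fib_le; rewrite // eq_sym.
Qed.

Lemma Fii n (i : 'I_n) : #|F i i| = 0.
Proof.
rewrite /F cardS big1 // => s _.
case: (boolP (s i == i)) => [/eqP e| _]; last by rewrite andbF.
suff -> : derangement s = false by [].
by apply/negbTE/negP => /forallP /(_ i); rewrite e eqxx.
Qed.

Lemma sum_lt_const n m c : m <= n -> \sum_(i < n | i < m) c = m * c.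
Proof.
move=> mn; transitivity (\sum_(0 <= i < m) c); last by rewrite sum_nat_const_nat subn0.
by rewrite (big_nat_widen 0 m n) // big_mkord.
Qed.

Definition Bad n m : {set 'S_n} := [set s : 'S_n | derangement s && ~~ goodb m s].

Lemma bad_bound n m : m <= n -> n.-1 * #|Bad n m| <= m * m * #|derangements n|.
Proof.
move=> mn.
have step : #|Bad n m| <= \sum_(i : 'I_n | i < m) \sum_(v : 'I_n | v < m) #|F i v|.
  have -> : \sum_(i : 'I_n | i < m) \sum_(v : 'I_n | v < m) #|F i v| =
    \sum_(s : 'S_n) \sum_(i : 'I_n | i < m) \sum_(v : 'I_n | v < m)
       ((derangement s && (s i == v)) : nat).
    rewrite [RHS]exchange_big; apply: eq_bigr => i _; rewrite [RHS]exchange_big.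
    by apply: eq_bigr => v _; rewrite cardS.
  rewrite /Bad cardS; apply: leq_sum => s _.
  case: (boolP (derangement s && ~~ goodb m s)) => // /andP [ds ng].
  move: ng; rewrite negb_forall => /existsP [i]; rewrite negb_imply -ltnNge => /andP [im sim].
  rewrite (bigD1 i) //= (bigD1 (s i)) //= ds eqxx /=.
  by rewrite -addnA leq_addr.
apply: leq_trans (leq_mul (leqnn _) step) _.
rewrite big_distrr /=.
apply: (@leq_trans (\sum_(i : 'I_n | i < m) \sum_(v : 'I_n | v < m) #|derangements n|)).
  apply: leq_sum => i _; rewrite big_distrr /=; apply: leq_sum => v _.
  case: (eqVneq i v) => [->|iv]; first by rewrite Fii muln0.
  exact: fib_bound.
by rewrite !sum_lt_const // mulnA.
Qed.

Lemma D_pos n : 1 < n -> 0 < #|derangements n|.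
Proof.
move=> n1; apply/card_gt0P; exists (perm (@ordS_inj n)); rewrite inE.
apply/forallP => i; rewrite permE; apply/eqP => /(congr1 val) /=.
case: (ltnP i.+1 n) => h.
  by rewrite modn_small // => e; apply: (n_Sn _ (esym e)).
have e : i.+1 = n by apply/eqP; rewrite eqn_leq (ltn_ord i) h.
move=> h'; have : i.+1 %% n = 0 by rewrite {1}e modnn.
by rewrite h' => i0; move: n1; rewrite -e i0.
Qed.
Theorem theorem2 (m r : nat) (hm : (2 <= m)%N) (hr : (r <= m - 1)%N) :
  forall eps : rat, (0 < eps)%R ->
  exists N : nat, forall n : nat, (N <= n)%N ->
    (`| maj_ratio n m r - 1 / m%:R | < eps)%R.
Proof.
move=> eps eps0.
have m1 : 1 < m := hm.
have m0 : 0 < m := ltnW hm.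
have rm : r < m by rewrite (leq_ltn_trans hr) // subn1 ltn_predL.
pose K := Num.bound ((m * m)%:R / eps)%R.
exists (K.+2 + m) => n hn.
have mn : m <= n by apply: leq_trans hn; rewrite leq_addl.
have Kn : K.+2 <= n by apply: leq_trans hn; rewrite leq_addr.
have n1 : 1 < n by apply: leq_trans Kn.
set d := #|derangements n|.
set x := #|derangements_maj_mod n m r|.
set c := #|cls n m r|.
set B := #|Bad n m|.
set b := #|[set s : 'S_n | (derangement s && (maj s %% m == r)) && ~~ goodb m s]|.
have hd : d = m * c + B.
  rewrite /c (cls_eq m1 mn rm) -G_card //.
  rewrite /d /B /derangements /G /Bad !cardS -big_split; apply: eq_bigr => s _ /=.
  by case: (derangement s); case: (goodb m s).
have hx : x = c + b.
  rewrite /x /c /b /derangements_maj_mod /cls !cardS -big_split; apply: eq_bigr => s _ /=.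
  rewrite /G inE.
  by case: (derangement s); case: (goodb m s); case: (maj s %% m == r).
have hb : b <= B.
  apply: subset_leq_card; apply/subsetP => s; rewrite !inE => /andP [/andP [ds _] ng].
  by rewrite ds ng.
have hB : n.-1 * B <= m * m * d by apply: bad_bound.
have d0 : 0 < d by apply: D_pos.
rewrite /maj_ratio -/d -/x.
have dR : (d%:R != 0 :> rat)%R by rewrite pnatr_eq0 -lt0n.
have mR : (m%:R != 0 :> rat)%R by rewrite pnatr_eq0 -lt0n.
have e1 : (x%:R / d%:R - 1 / m%:R = (x%:R * m%:R - d%:R) / (d%:R * m%:R) :> rat)%R.
  by rewrite -mulNr addf_div // mulN1r.
have e2 : (x%:R * m%:R - d%:R = (m * b)%:R - B%:R :> rat)%R.
  rewrite hx hd !natrD !natrM mulrDl opprD addrA [(c%:R * m%:R)%R]mulrC.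
  by rewrite [(m%:R * c%:R + _)%R]addrC addrK mulrC.
have pos : (0 < d%:R * m%:R :> rat)%R by rewrite mulr_gt0 // ltr0n.
rewrite e1 e2 normf_div (ger0_norm (ltW pos)) ltr_pdivrMr //.
have h1 : (`|(m * b)%:R - B%:R| <= (m * B)%:R :> rat)%R.
  rewrite ler_norml; apply/andP; split.
    rewrite lerBrDr addrC lerBlDr -natrD ler_nat.
    by apply: leq_trans (leq_addl _ _); rewrite leq_pmull.
  by rewrite lerBlDr -natrD ler_nat (leq_trans (leq_mul (leqnn m) hb)) // leq_addr.
apply: le_lt_trans h1 _.
have hK : ((m * m)%:R < eps * (n.-1)%:R :> rat)%R.
  have := @archi_boundP _ ((m * m)%:R / eps)%R.
  rewrite ltr_pdivrMr // => /(_ (divr_ge0 (ler0n _ _) (ltW eps0))) h.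
  apply: lt_le_trans h _; rewrite mulrC ler_pM2l // ler_nat.
  by rewrite -ltnS prednK ?(leq_trans _ Kn) // ltnW.
have hn1 : (0 < (n.-1)%:R :> rat)%R by rewrite ltr0n -ltnS prednK // ltnW.
have hBd : (B%:R < eps * d%:R :> rat)%R.
  rewrite -(ltr_pM2l hn1).
  apply: (@le_lt_trans _ _ ((m * m * d)%:R)%R).
    by rewrite -natrM ler_nat.
  rewrite natrM mulrA [((n.-1)%:R * eps)%R]mulrC ltr_pM2r ?ltr0n //.
rewrite natrM [(m%:R * _)%R]mulrC mulrA ltr_pM2r ?ltr0n //.
Qed.
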